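(* Let $F=\frac19\begin{pmatrix}1&1&1\\1&1&1\\1&1&1\end{pmatrix}$ (box blur filter). Then the equation $F*X=B$ with the zero boundary condition, for unknown $X\in\mathbb{R}^{m\times n}$, has a unique solution for every $B\in\mathbb{R}^{m\times n}$ if and only if $m,n\notin\{3l-1: l\in\mathbb{N}\}$.
   Context: $\mathbb{N}=\{1,2,3,\dots\}$. For $F=[f_{ij}]\in\mathbb{R}^{3\times3}$ and $X=[x_{ij}]\in\mathbb{R}^{m\times n}$, the convolution $F*X\in\mathbb{R}^{m\times n}$ is defined by $[F*X]_{ij}=\sum_{l_1=1}^3\sum_{l_2=1}^3 f_{l_1l_2}\,x_{i-l_1+2,\,j-l_2+2}$ for $1\le i\le m$, $1\le j\le n$, where under the zero boundary condition all values $x_{ij}$ with $i\in\{0,m+1\}$ or $j\in\{0,n+1\}$ are $0$. *)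

(* Defs.v *)
From Stdlib Require Import Reals.
From mathcomp Require Import all_boot all_order all_algebra.
From mathcomp Require Import Rstruct.
Set Implicit Arguments. Unset Strict Implicit. Unset Printing Implicit Defensive.
Import GRing.Theory Num.Theory.
Local Open Scope ring_scope.

(* Zero-extension of X : m x n matrix to integer indices (0-based):
   entries outside 0..m-1 / 0..n-1 are 0 (zero boundary condition). *)
Definition zext (m n : nat) (X : 'M[R]_(m, n)) (i j : int) : R :=
  match i, j with
  | Posz i', Posz j' =>
      match @insub nat (fun k => (k < m)%N) 'I_m i',
            @insub nat (fun k => (k < n)%N) 'I_n j' with
      | Some a, Some b => X a b
      | _, _ => 0
      end
  | _, _ => 0
  end.

(* [F*X]_{ij} = sum_{l1,l2=1..3} f_{l1 l2} x_{i-l1+2, j-l2+2}  (1-based);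
   0-based: l1,l2 in 0..2, row index i - l1 + 1, column index j - l2 + 1. *)
Definition conv3 (m n : nat) (F : 'M[R]_3) (X : 'M[R]_(m, n)) : 'M[R]_(m, n) :=
  \matrix_(i < m, j < n)
    \sum_(l1 < 3) \sum_(l2 < 3)
      F l1 l2 * zext X (i%:Z - l1%:Z + 1) (j%:Z - l2%:Z + 1).

Definition box_blur : 'M[R]_3 := \matrix_(i < 3, j < 3) (9%:R)^-1.

(* Main.v *)
Require Import Defs.
From Stdlib Require Import Reals.
From mathcomp Require Import all_boot all_order all_algebra.
From mathcomp Require Import Rstruct.
From mathcomp Require Import ring lra zify.
Set Implicit Arguments. Unset Strict Implicit. Unset Printing Implicit Defensive.
Import GRing.Theory Num.Theory.
Local Open Scope ring_scope.

Definition Ez (k : nat) (F : 'I_k -> R) (z : int) : R :=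
  match z with
  | Posz p => match @insub nat (fun q => (q < k)%N) 'I_k p with
              | Some a => F a | None => 0 end
  | Negz _ => 0
  end.

Lemma zextE m n (X : 'M[R]_(m, n)) a b :
  zext X a b = Ez (fun a' => Ez (X a') b) a.
Proof.
case: a => [a|a]; case: b => [b|b]; rewrite /zext /Ez //;
  by case: insub => //; case: insub.
Qed.

Lemma EzD k (f g : 'I_k -> R) z : Ez (fun a => f a + g a) z = Ez f z + Ez g z.
Proof. by case: z => [p|p] /=; [case: insub => // ; rewrite addr0 | rewrite addr0]. Qed.

Lemma sum_pred1 k (F : 'I_k -> R) (p : nat) :
  \sum_(a < k) (((a : nat) == p)%:R * F a) = Ez F p.
Proof.
rewrite /Ez; case: insubP => [a Hp Ha | Hp].
  rewrite (bigD1 a) //= Ha eqxx mul1r big1 ?addr0 // => b Hb.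
  by rewrite -Ha (inj_eq val_inj) (negbTE Hb) mul0r.
rewrite big1 // => b _.
case: eqP => [Eb|]; last by rewrite mul0r.
by move: Hp; rewrite -Eb ltn_ord.
Qed.

Definition Tm k : 'M[R]_k :=
  \matrix_(i < k, j < k) (((j : nat) == i)%:R + ((j : nat) == i.+1)%:R + ((i : nat) == j.+1)%:R).

Lemma Tm_sym k (i j : 'I_k) : Tm k i j = Tm k j i.
Proof. by rewrite !mxE (eq_sym (j : nat)) addrAC. Qed.

Lemma Tsum k (F : 'I_k -> R) (i : 'I_k) :
  \sum_(a < k) Tm k i a * F a = Ez F i + Ez F (i.+1)%:Z + Ez F (i%:Z - 1).
Proof.
under eq_bigr do rewrite mxE !mulrDl.
rewrite !big_split /= !sum_pred1; congr (_ + _).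
case: i => [[|i] Hi].
  by rewrite big1 // => a _; rewrite mul0r.
have -> : (i.+1%:Z - 1 = i%:Z) by lia.
rewrite -sum_pred1; apply: eq_bigr => a _.
by rewrite eqSS eq_sym.
Qed.

Lemma sum3 (F : 'I_3 -> R) : \sum_(l < 3) F l = F ord0 + F (inord 1) + F (inord 2).
Proof.
rewrite !big_ord_recl big_ord0 addr0 addrA; congr (_ + _ + _); congr F; apply: val_inj;
 by rewrite /= inordK.
Qed.

Lemma convE m n (X : 'M[R]_(m, n)) :
  conv3 box_blur X = (9%:R)^-1 *: (Tm m *m (X *m Tm n)).
Proof.
apply/matrixP => i j; rewrite !mxE.
under [X in _ = _ * X]eq_bigr => a _.
  rewrite [(X *m _) _ _]mxE.
  under eq_bigr do rewrite Tm_sym mulrC.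
  rewrite Tsum.
  over.
rewrite Tsum !EzD.
rewrite sum3 !sum3 !mxE !zextE !inordK //.
have e0 : forall t : nat, (t%:Z - (@nat_of_ord 3 ord0)%:Z + 1 = t.+1%:Z) by move=> t; rewrite /=; lia.
have e1 : forall t : nat, (t%:Z - (1%N)%:Z + 1 = t%:Z) by move=> t; lia.
have e2 : forall t : nat, (t%:Z - (2%N)%:Z + 1 = t%:Z - 1) by move=> t; lia.
rewrite !e0 !e1 !e2.
ring.
Qed.

Fixpoint p (j : nat) : R :=
  match j with 0 => 0 | 1 => 1 | (j'.+1 as j1).+1 => - p j' - p j1 end.

Lemma pS2 j : p j.+2 = - p j - p j.+1. Proof. by []. Qed.
Lemma p0 : p 0 = 0. Proof. by []. Qed.
Lemma p1 : p 1 = 1. Proof. by []. Qed.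

Lemma p3 l : [/\ p (3 * l) = 0, p (3 * l).+1 = 1 & p (3 * l).+2 = -1].
Proof.
elim: l => [|l [H0 H1 H2]]; first by rewrite muln0 pS2 p0 p1 oppr0 sub0r.
have -> : (3 * l.+1 = (3 * l).+3)%N by lia.
have E3 : p (3 * l).+3 = 0 by rewrite pS2 H1 H2; ring.
have E4 : p (3 * l).+4 = 1 by rewrite pS2 H2 E3; ring.
split => //; by rewrite pS2 E3 E4; ring.
Qed.

Lemma EzT k (u : 'I_k -> R) j (Hj : (j < k)%N) : Ez u j = u (Ordinal Hj).
Proof. by rewrite /Ez; case: insubP => [b _ Hb|]; [congr u; apply: val_inj | rewrite Hj]. Qed.

Lemma EzF k (u : 'I_k -> R) j (Hj : ~~ (j < k)%N) : Ez u j = 0.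
Proof. by rewrite /Ez insubF //; apply/negbTE. Qed.

Lemma Ez_ord k (u : 'I_k -> R) (a : 'I_k) : Ez u a = u a.
Proof. by rewrite (EzT u (ltn_ord a)); congr u; apply: val_inj. Qed.

Lemma pnz k : (forall l : nat, (0 < l)%N -> k <> (3 * l - 1)%N) -> p k.+1 != 0.
Proof.
move=> H.
have [q [r [Hr Hk]]] : exists q r, (r < 3)%N /\ k.+1 = (3 * q + r)%N.
  exists (k.+1 %/ 3)%N, (k.+1 %% 3)%N; split; first by rewrite ltn_pmod.
  by rewrite mulnC -divn_eq.
have [H0 H1 H2] := p3 q.
case: r Hr Hk => [|[|[|r]]] // _ Hk; rewrite Hk.
- exfalso; apply: (H q); lia.
- by rewrite addn1 H1 oner_eq0.
- by rewrite addn2 H2 oppr_eq0 oner_eq0.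
Qed.

Lemma ker1 k (u : 'I_k -> R) :
  (forall l : nat, (0 < l)%N -> k <> (3 * l - 1)%N) ->
  (forall i : 'I_k, \sum_(a < k) Tm k i a * u a = 0) -> forall a, u a = 0.
Proof.
move=> Hk H.
pose f (j : nat) := Ez u j.
have Eq : forall i, (i < k)%N -> f i + f i.+1 + (if i is i'.+1 then f i' else 0) = 0.
  move=> i Hi; have := H (Ordinal Hi); rewrite Tsum /f /=.
  case: i Hi => [|i] Hi; first by rewrite addr0.
  by have -> : (i.+1%:Z - 1 = i%:Z) by lia.
have Cl : forall j, (j < k)%N -> f j = f 0%N * p j.+1 /\ f j.+1 = f 0%N * p j.+2.
  elim => [|j IH] Hj.
    have := Eq 0%N Hj; rewrite addr0 => E; split; first by rewrite /= mulr1.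
    rewrite pS2 p0 p1; lra.
  have [IH1 IH2] := IH (ltnW Hj); split => //.
  have E := Eq j.+1 Hj.
  have -> : f j.+2 = - f j.+1 - f j by lra.
  rewrite IH1 IH2 [p j.+3]pS2; ring.
move=> a.
have Hk0 : (0 < k)%N by apply: leq_ltn_trans (ltn_ord a).
have Hk1 : (k.-1 < k)%N by rewrite prednK.
have [_ Hfk] := Cl k.-1 Hk1.
rewrite prednK // /f EzF ?ltnn // in Hfk.
have f00 : f 0%N = 0.
  apply/eqP; move: (pnz Hk) => Hp; apply: contraTT Hp => Hf.
  by apply/negPn/eqP; apply: (mulfI Hf); rewrite mulr0.
have [Ha _] := Cl a (ltn_ord a).
by move: Ha; rewrite f00 mul0r /f Ez_ord.
Qed.

Lemma vec_ker k l (Hl : (0 < l)%N) (Hk : k = (3 * l - 1)%N) (i : 'I_k) :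
  \sum_(a < k) Tm k i a * p a.+1 = 0.
Proof.
rewrite (Tsum (fun a : 'I_k => p a.+1)) Ez_ord.
have -> : Ez (fun a : 'I_k => p a.+1) i.+1 = p i.+2.
  case: (ltnP i.+1 k) => Hi; first by rewrite (EzT _ Hi).
  rewrite EzF -?ltnNge //.
  have -> : (i.+2 = 3 * l)%N by have := ltn_ord i; lia.
  by case: (p3 l).
have -> : Ez (fun a : 'I_k => p a.+1) (i%:Z - 1) = p i.
  case: i => [[|i] Hi]; first by [].
  rewrite [X in Ez _ X](_ : _ = i%:Z); last by rewrite /=; lia.
  by rewrite (EzT _ (ltnW Hi)).
rewrite pS2; ring.
Qed.

Lemma Tunit k : (forall l : nat, (0 < l)%N -> k <> (3 * l - 1)%N) -> Tm k \in unitmx.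
Proof.
move=> Hk; rewrite -row_free_unit -kermx_eq0; apply/eqP/matrixP => a b; rewrite [RHS]mxE.
have HK := mulmx_ker (Tm k).
apply: (ker1 Hk (u := fun c => kermx (Tm k) a c)) => i.
transitivity ((kermx (Tm k) *m Tm k) a i); last by rewrite HK mxE.
rewrite mxE.
by apply: eq_bigr => c _; rewrite Tm_sym mulrC.
Qed.

Lemma nine_neq0 : (9%:R : R) != 0.
Proof. by rewrite pnatr_eq0. Qed.

Theorem corollary1 (m n : nat) (Hm : (0 < m)%N) (Hn : (0 < n)%N) :
  (forall B : 'M[R]_(m, n), exists! X : 'M[R]_(m, n), conv3 box_blur X = B) <->
  ((forall l : nat, (0 < l)%N -> m <> (3 * l - 1)%N) /\
   (forall l : nat, (0 < l)%N -> n <> (3 * l - 1)%N)).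
Proof.
have C0 : conv3 box_blur (0 : 'M[R]_(m, n)) = 0 by rewrite convE mul0mx mulmx0 scaler0.
split.
  move=> H.
  have Hnz : forall X0 : 'M[R]_(m, n), conv3 box_blur X0 = 0 -> X0 = 0.
    move=> X0 HX0; case: (H 0) => X [_ HU].
    by rewrite -(HU _ HX0) (HU _ C0).
  split => l Hl Hk.
    pose X0 : 'M[R]_(m, n) := \matrix_(a, b) p a.+1.
    have : X0 = 0.
      apply: Hnz; rewrite convE mulmxA.
      have -> : Tm m *m X0 = 0.
        apply/matrixP => i b; rewrite [RHS]mxE -[RHS](vec_ker Hl Hk i) [LHS]mxE.
        by apply: eq_bigr => a _; rewrite /X0 [X in _ * X]mxE.
      by rewrite !mul0mx scaler0.
    move/matrixP => /(_ (Ordinal Hm) (Ordinal Hn)); rewrite !mxE p1 => /eqP.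
    by rewrite oner_eq0.
  pose X0 : 'M[R]_(m, n) := \matrix_(a, b) p b.+1.
  have : X0 = 0.
    apply: Hnz; rewrite convE.
    have -> : X0 *m Tm n = 0.
      apply/matrixP => a j; rewrite [RHS]mxE -[RHS](vec_ker Hl Hk j) [LHS]mxE.
      by apply: eq_bigr => b _; rewrite /X0 [X in X * _]mxE Tm_sym mulrC.
    by rewrite mulmx0 scaler0.
  move/matrixP => /(_ (Ordinal Hm) (Ordinal Hn)); rewrite !mxE p1 => /eqP.
  by rewrite oner_eq0.
move=> [Hm3 Hn3] B.
have UA := Tunit Hm3; have UC := Tunit Hn3.
have conv_inj : forall X Y : 'M[R]_(m, n), conv3 box_blur X = conv3 box_blur Y -> X = Y.
  move=> X Y; rewrite !convE => E.
  have := congr1 (fun M : 'M[R]_(m, n) => 9%:R *: M) E.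
  rewrite !scalerA mulfV ?nine_neq0 // !scale1r.
  by move/(can_inj (mulKmx UA))/(can_inj (mulmxK UC)).
exists (invmx (Tm m) *m (9%:R *: B) *m invmx (Tm n)).
have HX : conv3 box_blur (invmx (Tm m) *m (9%:R *: B) *m invmx (Tm n)) = B.
  by rewrite convE (mulmxKV UC) (mulKVmx UA) scalerA mulVf ?nine_neq0 // scale1r.
split => // Y HY.
by apply: conv_inj; rewrite HX HY.
Qed.
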